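(* Let $\mathbf i'=\eta_k\mathbf i$ be a 4-move, $i=i_k$, $j=i_{k+1}$. For $\mathbf g'=(g'_u)\in\mathbb Z^{\oplus\mathbb N}$ define $\mathbf g=(g_u)\in\mathbb Z^{\oplus\mathbb N}$ by: $A=g'_k+\mathsf c_{j,i}[-g'_{k+1}]_+$, $B=-g'_{k+1}+\mathsf c_{i,j}[-A]_+$, and $g_{k+3}=g'_{k+2}-\mathsf c_{j,i}[g'_{k+1}]_++[A]_+$, $g_{k+2}=g'_{k+3}-[-g'_{k+1}]_++[B]_+$, $g_{k+1}=-A+\mathsf c_{j,i}[-B]_+$, $g_k=-B$, $g_{k^-_{\mathbf i}}=g'_{(k+1)^-_{\mathbf i'}}+[g'_{k+1}]_+-[-B]_+$ (if $k^-_{\mathbf i}>0$), $g_{(k+1)^-_{\mathbf i}}=g'_{k^-_{\mathbf i'}}+[A]_+-\mathsf c_{j,i}[B]_+$ (if $(k+1)^-_{\mathbf i}>0$), and $g_u=g'_u$ for all other $u$. Then the map $\mathbf g'\mapsto\mathbf g$ sends the cone $C_{\mathbf i'}$ into the cone $C_{\mathbf i}$.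
   Context: $\mathfrak g$ is a complex finite-dimensional simple Lie algebra with index set $I$ and Cartan matrix $\mathsf C=(\mathsf c_{i,j})$. $\mathbb N=\{1,2,\dots\}$, $[a]_+=\max(a,0)$. $I^{(\infty)}$ is the set of sequences $\mathbf i=(i_u)_{u\in\mathbb N}\in I^{\mathbb N}$ in which each element of $I$ occurs infinitely often; $u^-_{\mathbf i}=\max(\{v<u:i_v=i_u\}\cup\{0\})$. A 4-move $\mathbf i'=\eta_k\mathbf i$ means $i_k=i_{k+2}=i'_{k+1}=i'_{k+3}$, $i_{k+1}=i_{k+3}=i'_k=i'_{k+2}$, $i_u=i'_u$ for $u\notin[k,k+3]$, and $\mathsf c_{i_{k+1},i_k}\mathsf c_{i_k,i_{k+1}}=2$ (so $(k+1)^-_{\mathbf i'}=k^-_{\mathbf i}$, $k^-_{\mathbf i'}=(k+1)^-_{\mathbf i}$). For $\mathbf i\in I^{\mathbb N}$, the cone $C_{\mathbf i}=\{\mathbf g=(g_u)\in\mathbb Z^{\oplus\mathbb N}:\sum_{v\ge u,\,i_v=i_u}g_v\ge0\ \text{for all }u\in\mathbb N\}$ ($\mathbb Z^{\oplus\mathbb N}$ = finitely supported integer sequences). *)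

(* Defs.v *)
From mathcomp Require Import all_boot all_order all_algebra.
Set Implicit Arguments. Unset Strict Implicit. Unset Printing Implicit Defensive.
Import Order.TTheory GRing.Theory Num.Theory.
Local Open Scope ring_scope.

Definition pos_part (a : int) : int := Num.max a 0.

(* Cartan matrix of a complex finite-dimensional simple Lie algebra, i.e.
   an indecomposable generalized Cartan matrix of finite type
   (symmetrizable with positive definite symmetrization). *)
Definition finite_type_cartan (I : finType) (C : I -> I -> int) : Prop :=
  [/\ (0 < #|I|)%N /\ (forall a, C a a = 2),
      (forall a b, a != b -> C a b <= 0),
      (forall a b, C a b = 0 <-> C b a = 0),
      (forall S : {set I}, S != set0 -> S != setT ->
         exists a, exists b, [/\ a \in S, b \notin S & C a b != 0]) &
      exists d : I -> int,
        [/\ (forall a, 0 < d a),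
            (forall a b, d a * C a b = d b * C b a) &
            (forall x : I -> rat, (exists a, x a != 0) ->
               0 < \sum_a \sum_b x a * ((d a * C a b)%:~R) * x b)]].

(* Sequences i = (i_u)_{u in N}, N = {1,2,...}; position 0 is unused. *)
Definition inf_often (I : finType) (s : nat -> I) : Prop :=
  forall a n, exists v, (n < v)%N /\ s v = a.

Definition uminus (I : finType) (s : nat -> I) (u : nat) : nat :=
  \max_(1 <= v < u | s v == s u) v.

Definition four_move (I : finType) (C : I -> I -> int) (k : nat)
  (s s' : nat -> I) : Prop :=
  [/\ (0 < k)%N,
      s k = s k.+2 /\ s k.+2 = s' k.+1 /\ s' k.+1 = s' k.+3,
      s k.+1 = s k.+3 /\ s k.+3 = s' k /\ s' k = s' k.+2,
      (forall u, (0 < u)%N -> (u < k)%N || (k.+3 < u)%N -> s u = s' u) &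
      C (s k.+1) (s k) * C (s k) (s k.+1) = 2].

Definition fin_supp (g : nat -> int) : Prop :=
  exists N, forall v, (N <= v)%N -> g v = 0.

Definition in_cone (I : finType) (s : nat -> I) (g : nat -> int) : Prop :=
  fin_supp g /\
  forall u, (0 < u)%N -> forall N, (forall v, (N <= v)%N -> g v = 0) ->
    0 <= \sum_(u <= v < N | s v == s u) g v.

Definition move_map (I : finType) (C : I -> I -> int) (k : nat)
  (s s' : nat -> I) (g' : nat -> int) : nat -> int :=
  let i := s k in let j := s k.+1 in
  let A := g' k + C j i * pos_part (- g' k.+1) in
  let B := - g' k.+1 + C i j * pos_part (- A) in
  let km := uminus s k in let k1m := uminus s k.+1 in
  fun u =>
    if u == k.+3 then g' k.+2 - C j i * pos_part (g' k.+1) + pos_part A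
    else if u == k.+2 then g' k.+3 - pos_part (- g' k.+1) + pos_part B
    else if u == k.+1 then - A + C j i * pos_part (- B)
    else if u == k then - B
    else if (0 < km)%N && (u == km) then
      g' (uminus s' k.+1) + pos_part (g' k.+1) - pos_part (- B)
    else if (0 < k1m)%N && (u == k1m) then
      g' (uminus s' k) + pos_part A - C j i * pos_part B
    else g' u.

(* Main.v *)
Require Import Defs.
From mathcomp Require Import all_boot all_order all_algebra.
From mathcomp Require Import zify.
Import Order.TTheory GRing.Theory Num.Theory.
Local Open Scope ring_scope.

Lemma pp_spec (x : int) : 0 <= pos_part x /\ x <= pos_part x /\ (pos_part x = x \/ pos_part x = 0).
Proof. rewrite /pos_part; case: (leP x 0) => h; lia. Qed.

Lemma core (cji cij a b c d Ti Tj : int) :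
 (cji = -1 /\ cij = -2) \/ (cji = -2 /\ cij = -1) ->
 0 <= d + Ti -> 0 <= b + d + Ti -> 0 <= c + Tj -> 0 <= a + c + Tj ->
 let A := a + cji * pos_part (-b) in let B := -b + cij * pos_part (-A) in
 (0 <= c - cji * pos_part b + pos_part A + Tj) /\
 (     0 <= d - pos_part (-b) + pos_part B + Ti) /\
 (     0 <= (-A + cji * pos_part (-B)) + (c - cji * pos_part b + pos_part A) + Tj) /\
 (     0 <= -B + (d - pos_part (-b) + pos_part B) + Ti) /\
 (     (pos_part b - pos_part (-B)) + -B + (d - pos_part (-b) + pos_part B) = b + d) /\
 (     (pos_part A - cji * pos_part B) + (-A + cji * pos_part (-B)) + (c - cji * pos_part b + pos_part A) = a + c).
Proof.
move=> hc h1 h2 h3 h4 A B.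
have s1 := pp_spec b. have s2 := pp_spec (-b). have s3 := pp_spec A.
have s4 := pp_spec (-A). have s5 := pp_spec B. have s6 := pp_spec (-B).
rewrite /B in s5 s6 *. rewrite /A in s3 s4 s5 s6 *.
move: s1 s2 s3 s4 s5 s6.
generalize (pos_part (- (- b + cij * pos_part (- (a + cji * pos_part (- b)))))) => p6.
generalize (pos_part (- b + cij * pos_part (- (a + cji * pos_part (- b))))) => p5.
generalize (pos_part (- (a + cji * pos_part (- b)))) => p4.
generalize (pos_part (a + cji * pos_part (- b))) => p3.
generalize (pos_part (- b)) => p2.
generalize (pos_part b) => p1.
case: hc => [[-> ->]|[-> ->]] => s1 s2 s3 s4 s5 s6; (split; [lia|split; [lia|split;[lia|split;[lia|split;lia]]]]).
Qed.


Lemma uminus_spec (I : finType) (s : nat -> I) x :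
  uminus s x = 0%N \/ [/\ (0 < uminus s x)%N, (uminus s x < x)%N & s (uminus s x) = s x].
Proof.
rewrite /uminus big_seq_cond.
apply: (big_ind (fun m => m = 0%N \/ [/\ (0 < m)%N, (m < x)%N & s m = s x])).
- by left.
- move=> a b Ha Hb; case: (leqP a b) => h.
  + by [].
  + by [].
- move=> v /andP [hv /eqP hs]; rewrite mem_index_iota in hv.
  right; split => //; lia.
Qed.

Lemma uminus_max (I : finType) (s : nat -> I) x v :
  (0 < v < x)%N -> s v = s x -> (v <= uminus s x)%N.
Proof.
move=> hv hs; rewrite /uminus.
apply: (leq_bigmax_seq (F := fun v => v)); last by apply/eqP.
by rewrite mem_index_iota.
Qed.

Lemma max_recr_skip (P : pred nat) x :
  (1 <= x)%N -> ~~ P x -> \max_(1 <= v < x.+1 | P v) v = \max_(1 <= v < x | P v) v.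
Proof.
move=> h1 hP; rewrite big_mkcond big_nat_recr //= (negbTE hP) maxn0.
by rewrite -big_mkcond.
Qed.

Lemma max_ext (I : finType) (s1 s2 : nat -> I) (a : I) x :
  (forall v, (0 < v < x)%N -> s1 v = s2 v) ->
  \max_(1 <= v < x | s1 v == a) v = \max_(1 <= v < x | s2 v == a) v.
Proof.
move=> h; rewrite big_nat_cond [RHS]big_nat_cond; apply: eq_bigl => v.
case hv: (1 <= v < x)%N => //=; rewrite h //.
Qed.

Lemma peel (P : pred nat) (F : nat -> int) m n : (m < n)%N ->
  \sum_(m <= v < n | P v) F v = (if P m then F m else 0) + \sum_(m.+1 <= v < n | P v) F v.
Proof. by move=> h; rewrite big_ltn_cond //; case: (P m) => //; rewrite add0r. Qed.

Lemma ind_sum (P : pred nat) (c : int) a b x :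
  \sum_(a <= v < b | P v) (if v == x then c else 0) =
  if (a <= x < b)%N && P x then c else 0.
Proof.
case h: ((a <= x < b)%N && P x).
- move/andP: h => [hx hP].
  rewrite big_mkcond (bigD1_seq x) /= ?mem_index_iota ?iota_uniq // hP eqxx.
  rewrite big1 ?addr0 // => v /negbTE ->; by case: (P v).
- rewrite big_nat_cond big1 // => v /andP [hr hP].
  case: eqP => // e; subst v; by rewrite hr hP in h.
Qed.

Theorem lemma3p8 (I : finType) (C : I -> I -> int) (k : nat)
  (s s' : nat -> I) (g' : nat -> int) :
  finite_type_cartan C ->
  inf_often s ->
  four_move C k s s' ->
  in_cone s' g' ->
  in_cone s (move_map C k s s' g').
Proof.
move=> [[_ hCd] hoff _ _ _] _ [hk [e0 [e1 e2]] [e3 [e4 e5]] hout hprod] [[N0 hN0] hcone].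
set i := s k in e0 hprod *; set j := s k.+1 in e3 hprod *.
have hij : i != j.
  apply/eqP => e; move: hprod; rewrite e hCd; lia.
have hc : (C j i = -1 /\ C i j = -2) \/ (C j i = -2 /\ C i j = -1).
  have h1 := hoff _ _ hij; have h2 : C j i <= 0 by apply: hoff; rewrite eq_sym.
  move: hprod; rewrite mulrC => hprod.
  have : C j i = 0 \/ C j i = -1 \/ C j i = -2 \/ C j i <= -3 by lia.
  case=> [e|[e|[e|e]]]; rewrite ?e in hprod *; try nia.
  have : C i j = 0 \/ C i j <= -1 by lia.
  case=> [e'|e']; [rewrite e' in hprod; lia| nia].
have sk2 : s k.+2 = i by [].
have s'k1 : s' k.+1 = i by rewrite -e1.
have s'k3 : s' k.+3 = i by rewrite -e2 -e1.
have sk3 : s k.+3 = j by [].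
have s'k0 : s' k = j by rewrite -e4.
have s'k2 : s' k.+2 = j by rewrite -e5 -e4.
have hji : (j == i) = false by apply/negbTE; rewrite eq_sym.
have hij' : (i == j) = false by apply/negbTE.
have hkm : uminus s' k.+1 = uminus s k.
  rewrite /uminus max_recr_skip; [|lia|by rewrite s'k0 s'k1 hji].
  rewrite s'k1; apply: max_ext => v hv; apply/esym/hout; lia.
have hk1m : uminus s' k = uminus s k.+1.
  rewrite /uminus [RHS]max_recr_skip; [|lia|by rewrite -/i -/j hij'].
  rewrite s'k0; apply: max_ext => v hv; apply/esym/hout; lia.
set km := uminus s k in hkm *; set k1m := uminus s k.+1 in hk1m *.
have hkmS : km = 0%N \/ [/\ (0 < km)%N, (km < k)%N & s km = i] by apply: uminus_spec.
have hk1mS : k1m = 0%N \/ [/\ (0 < k1m)%N, (k1m < k)%N & s k1m = j].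
  case: (uminus_spec _ s k.+1); rewrite -/k1m; [by left|move=> [h1 h2 h3]].
  right; split => //.
  have : k1m != k by apply/eqP => e; move: h3; rewrite e -/i -/j => /eqP; rewrite hij'.
  lia.
set g := move_map C k s s' g'.
set A := g' k + C j i * pos_part (- g' k.+1).
set B := - g' k.+1 + C i j * pos_part (- A).
have hgl : forall v, (0 < v < k)%N -> g v = g' v + (if v == km then pos_part (g' k.+1) - pos_part (- B) else 0) + (if v == k1m then pos_part A - C j i * pos_part B else 0).
  move=> v hv. rewrite /g /move_map /=.
  rewrite -/i -/j -/km -/k1m -/A -/B hkm hk1m.
  have -> : (v == k.+3) = false by apply/eqP; lia.
  have -> : (v == k.+2) = false by apply/eqP; lia.
  have -> : (v == k.+1) = false by apply/eqP; lia.
  have -> : (v == k) = false by apply/eqP; lia.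
  have hkk : (0 < km)%N -> (km == k1m) = false.
    move=> h; apply/eqP => e; case: hkmS => [?|[_ _ h1]]; first lia.
    case: hk1mS => [?|[_ _ h2]]; first lia.
    by move: hij; rewrite -h1 -h2 e eqxx.
  case: (eqVneq v km) => [e|ne].
    subst v; have h0 : (0 < km)%N by lia.
    by rewrite h0 (hkk h0) /= addr0 addrA.
  rewrite andbF /=; case: (eqVneq v k1m) => [e|ne'].
    subst v; have -> : (0 < k1m)%N by lia.
    by rewrite /= addr0 addrA.
  by rewrite andbF /= !addr0.
have hkmlt : (km < k)%N by case: hkmS => [->|[]].
have hk1mlt : (k1m < k)%N by case: hk1mS => [->|[]].
have hg3 : g k.+3 = g' k.+2 - C j i * pos_part (g' k.+1) + pos_part A.
  by rewrite /g /move_map /= eqxx.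
have hg2 : g k.+2 = g' k.+3 - pos_part (- g' k.+1) + pos_part B.
  rewrite /g /move_map /=.
  have -> : (k.+2 == k.+3) = false by apply/eqP; lia.
  by rewrite eqxx.
have hg1 : g k.+1 = - A + C j i * pos_part (- B).
  rewrite /g /move_map /=.
  have -> : (k.+1 == k.+3) = false by apply/eqP; lia.
  have -> : (k.+1 == k.+2) = false by apply/eqP; lia.
  by rewrite eqxx.
have hg0 : g k = - B.
  rewrite /g /move_map /=.
  have -> : (k == k.+3) = false by apply/eqP; lia.
  have -> : (k == k.+2) = false by apply/eqP; lia.
  have -> : (k == k.+1) = false by apply/eqP; lia.
  by rewrite eqxx.
have hgh : forall v, (k.+3 < v)%N -> g v = g' v.
  move=> v hv; rewrite /g /move_map /=.
  have -> : (v == k.+3) = false by apply/eqP; lia.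
  have -> : (v == k.+2) = false by apply/eqP; lia.
  have -> : (v == k.+1) = false by apply/eqP; lia.
  have -> : (v == k) = false by apply/eqP; lia.
  have -> : (v == km) = false by apply/eqP; lia.
  have -> : (v == k1m) = false by apply/eqP; lia.
  by rewrite !andbF.
split.
  exists (maxn N0 k.+4) => v hv; rewrite hgh; [apply: hN0; lia| lia].
move=> u hu N hN.
case: (leqP N u) => huN; first by rewrite big_geq.
set M := maxn N (maxn N0 k.+4).
have hM : (k.+4 <= M)%N by lia.
have hg'M : forall v, (M <= v)%N -> g' v = 0 by move=> v hv; apply: hN0; lia.
have -> : \sum_(u <= v < N | s v == s u) g v = \sum_(u <= v < M | s v == s u) g v.
  rewrite [RHS](big_cat_nat (n:=N)) /=; [|lia|lia].
  have hz : \sum_(N <= v < M | s v == s u) g v = 0.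
    by rewrite big_nat_cond big1 // => v /andP [/andP [h1 _] _]; exact: hN.
  by rewrite hz addr0.
have htail : forall m l, (k.+4 <= m)%N ->
    \sum_(m <= v < M | s v == l) g v = \sum_(m <= v < M | s' v == l) g' v.
  move=> m l hm; rewrite big_nat_cond [RHS]big_nat_cond; apply: eq_big => v /=.
    case hr: (m <= v < M)%N => //=; rewrite hout //; lia.
  move=> /andP [hr _]; apply: hgh; lia.
have hc' := fun u hu => hcone u hu M hg'M.
set Ti := \sum_(k.+4 <= v < M | s' v == i) g' v.
set Tj := \sum_(k.+4 <= v < M | s' v == j) g' v.
have hp3 : 0 <= g' k.+3 + Ti.
  have := hc' k.+3 isT; rewrite (peel _ _ k.+3); last lia.
  by rewrite s'k3 eqxx.
have hp2 : 0 <= g' k.+2 + Tj.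
  have := hc' k.+2 isT; rewrite (peel _ _ k.+2) ?(peel _ _ k.+3); try lia.
  by rewrite s'k2 s'k3 eqxx hij' add0r.
have hp1 : 0 <= g' k.+1 + g' k.+3 + Ti.
  have := hc' k.+1 isT; rewrite (peel _ _ k.+1) ?(peel _ _ k.+2) ?(peel _ _ k.+3); try lia.
  rewrite s'k2 s'k3 s'k1 eqxx hji add0r addrA //.
have hp0 : 0 <= g' k + g' k.+2 + Tj.
  have := hc' k hk; rewrite (peel _ _ k) ?(peel _ _ k.+1) ?(peel _ _ k.+2) ?(peel _ _ k.+3); try lia.
  rewrite s'k0 s'k2 s'k3 s'k1 eqxx hij' !add0r addrA //.
have := core (C j i) (C i j) (g' k) (g' k.+1) (g' k.+2) (g' k.+3) Ti Tj hc hp3 hp1 hp2 hp0.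
rewrite -/A -/B => -[q3 [q2 [q1 [q0 [qi qj]]]]].
have ht : forall l, \sum_(k.+4 <= v < M | s v == l) g v = \sum_(k.+4 <= v < M | s' v == l) g' v.
  by move=> l; apply: htail.
case: (leqP k.+4 u) => hu4.
  have := hc' u hu; rewrite htail // (hout u) //; lia.
case: (leqP k u) => huk.
  have : u = k \/ u = k.+1 \/ u = k.+2 \/ u = k.+3 by lia.
  case=> [->|[->|[->|->]]].
  - rewrite (peel _ _ k) ?(peel _ _ k.+1) ?(peel _ _ k.+2) ?(peel _ _ k.+3); try lia.
    rewrite ht -/Ti eqxx hji sk2 sk3 hji eqxx hg0 hg2.
    subst B A; lia.
  - rewrite (peel _ _ k.+1) ?(peel _ _ k.+2) ?(peel _ _ k.+3); try lia.
    rewrite -/j ht -/Tj eqxx sk2 sk3 hij' eqxx hg1 hg3.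
    subst B A; lia.
  - rewrite (peel _ _ k.+2) ?(peel _ _ k.+3); try lia.
    rewrite sk2 ht -/Ti eqxx sk3 hji hg2.
    subst B A; lia.
  - rewrite (peel _ _ k.+3); try lia.
    rewrite sk3 ht -/Tj eqxx hg3.
    subst B A; lia.
have hsu : s' u = s u by apply/esym/hout => //; lia.
have h := hc' u hu; rewrite hsu in h.
set l := s u in hsu h *.
have hsplit : forall (F : nat -> int) (t : nat -> I),
    \sum_(u <= v < M | t v == l) F v = \sum_(u <= v < k | t v == l) F v +
      ((if t k == l then F k else 0) + ((if t k.+1 == l then F k.+1 else 0) +
      ((if t k.+2 == l then F k.+2 else 0) + ((if t k.+3 == l then F k.+3 else 0) +
      \sum_(k.+4 <= v < M | t v == l) F v)))).
  move=> F t; rewrite (big_cat_nat (n:=k)); [|lia|lia].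
  by rewrite (peel _ _ k) ?(peel _ _ k.+1) ?(peel _ _ k.+2) ?(peel _ _ k.+3); try lia.
rewrite hsplit in h; rewrite hsplit ht.
have hs' : \sum_(u <= v < k | s' v == l) g' v = \sum_(u <= v < k | s v == l) g' v.
  rewrite big_nat_cond [RHS]big_nat_cond; apply: eq_bigl => v /=.
  case hr: (u <= v < k)%N => //=; rewrite hout //; lia.
have hfirst : \sum_(u <= v < k | s v == l) g v = \sum_(u <= v < k | s v == l) g' v +
   (if (u <= km < k)%N && (s km == l) then pos_part (g' k.+1) - pos_part (- B) else 0) +
   (if (u <= k1m < k)%N && (s k1m == l) then pos_part A - C j i * pos_part B else 0).
  rewrite -(ind_sum (fun v => s v == l) _ u k km) -(ind_sum (fun v => s v == l) _ u k k1m) -!big_split /= big_nat_cond [RHS]big_nat_cond.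
  apply: eq_bigr => v /andP [/andP [h1 h2] _]; apply: hgl; lia.
rewrite hs' in h; rewrite hfirst.
move: h; rewrite hg0 hg1 hg2 hg3 s'k0 s'k1 s'k2 s'k3 sk2 sk3 -/i -/j.
have hlu : s u = l by [].
case: (eqVneq l i) => [eli|nli].
  have hukm : (u <= km)%N by apply: uminus_max; [lia|rewrite hlu eli].
  have skm : s km = i by case: hkmS => [?|[]]; [lia|].
  have -> : ((u <= km < k)%N && (s km == l)) = true by rewrite hukm hkmlt skm eli eqxx.
  have -> : ((u <= k1m < k)%N && (s k1m == l)) = false.
    case: hk1mS => [->|[_ _ ->]]; first by rewrite (_ : (u <= 0)%N = false) //; lia.
    by rewrite eli hji andbF.
  rewrite eli ?eqxx ?hji.
  subst B A; lia.
case: (eqVneq l j) => [elj|nlj].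
  have huk1m : (u <= k1m)%N by apply: uminus_max; [lia|rewrite hlu elj].
  have sk1m : s k1m = j by case: hk1mS => [?|[]]; [lia|].
  have -> : ((u <= k1m < k)%N && (s k1m == l)) = true by rewrite huk1m hk1mlt sk1m elj eqxx.
  have -> : ((u <= km < k)%N && (s km == l)) = false.
    case: hkmS => [->|[_ _ ->]]; first by rewrite (_ : (u <= 0)%N = false) //; lia.
    by rewrite elj hij' andbF.
  rewrite elj ?eqxx ?hij'.
  subst B A; lia.
have -> : ((u <= k1m < k)%N && (s k1m == l)) = false.
  case: hk1mS => [->|[_ _ ->]]; first by rewrite (_ : (u <= 0)%N = false) //; lia.
  by rewrite eq_sym (negbTE nlj) andbF.
have -> : ((u <= km < k)%N && (s km == l)) = false.
  case: hkmS => [->|[_ _ ->]]; first by rewrite (_ : (u <= 0)%N = false) //; lia.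
  by rewrite eq_sym (negbTE nli) andbF.
by rewrite !addr0 !add0r.
Qed.
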